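(* Let $F$ be a vector lattice endowed with a locally solid additive convergence $\eta$, let $A\subset F$, and let $E,H$ be ideals of $F$. Then: (i) $u_{A}\eta=u_{I(A)}\eta$, and this is the weakest locally solid additive convergence on $F$ which is stronger than $\eta$ on $[0_{F},|a|]$ for every $a\in A$; moreover $u_A\eta$ coincides with $\eta$ on $[0_F,|a|]$ for every $a\in A$. (ii) For a net $(f_\alpha)_{\alpha}\subset F_+$: $f_{\alpha}\xrightarrow{u_{A}\eta} 0_{F}$ iff $g_{\alpha}\xrightarrow{\eta} 0_{F}$ for every $a\in A$ and every net $(g_{\alpha})\subset[0_{F},|a|]$ (indexed by the same set) with $0_{F}\le g_{\alpha}\le f_{\alpha}$ for every $\alpha$. (iii) $u_{H}u_{E}\eta=u_{E\cap H}\eta$. In particular, $u_{E}u\eta=uu_{E}\eta=u_{E}u_{E}\eta=u_{E}\eta$. (iv) If $\eta$ is idempotent, then $u_{A}\eta=u_{\overline{I(A)}}\eta$. (v) If $\eta$ is idempotent and $h\in F_{+}$ is a topological unit, then for a net $(f_{\alpha})\subset F_{+}$ we have $f_{\alpha}\xrightarrow{u\eta} 0_{F}$ iff $h\wedge f_{\alpha}\xrightarrow{\eta} 0_{F}$.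
   Context: A convergence on a vector lattice $F$ is locally solid additive if addition and $f\mapsto -f$ are continuous and $|e_\alpha|\le|f_\alpha|$, $f_\alpha\to0_F$ imply $e_\alpha\to 0_F$. For $A\subset F$, $u_A\eta$ is the locally solid additive convergence on $F$ given by: $f_\alpha\xrightarrow{u_A\eta}f$ iff $|a|\wedge|f_\alpha-f|\xrightarrow{\eta}0_F$ for every $a\in A$; $u\eta:=u_F\eta$. $I(A)$ denotes the ideal generated by $A$. A convergence $\theta$ is stronger than $\eta$ on a set $S$ if whenever a net in $S$ $\theta$-converges to a point of $S$, it $\eta$-converges to that point; ''coincides on $S$'' means both directions. A set is closed if it contains the limits of all convergent nets in it; $\overline{G}$ (closure w.r.t. $\eta$) is the intersection of all closed sets containing $G$. $\eta$ is idempotent if for any nets $(f_{\alpha})_{\alpha\in A},(g_{\beta})_{\beta\in B}\subset F_{+}$ with $g_{\beta}\xrightarrow{\eta}0_{F}$ and $(f_{\alpha}-g_{\beta})^{+}\xrightarrow[\alpha]{\eta}0_{F}$ for every $\beta$, one has $f_{\alpha}\xrightarrow{\eta}0_{F}$. An element $h\in F_+$ is a topological unit if the principal ideal $F_h=\bigcup_{\lambda\ge0}\lambda[-h,h]$ satisfies $\overline{F_h}=F$. *)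

(* Defs.v *)
From HB Require Import structures.
From mathcomp Require Import all_boot all_order all_algebra.
From mathcomp Require Import classical_sets reals.

Set Implicit Arguments.
Unset Strict Implicit.
Unset Printing Implicit Defensive.

Import Order.TTheory GRing.Theory Num.Theory.
Local Open Scope ring_scope.

HB.mixin Record Lmodule_isVectorLattice (R : realType) V
    of Num.POrderedZmodule V & GRing.Lmodule R V := {
  vsup : V -> V -> V;
  vinf : V -> V -> V;
  vsup_ubl : forall x y : V, x <= vsup x y;
  vsup_ubr : forall x y : V, y <= vsup x y;
  vsup_least : forall x y z : V, x <= z -> y <= z -> vsup x y <= z;
  vinf_lbl : forall x y : V, vinf x y <= x;
  vinf_lbr : forall x y : V, vinf x y <= y;
  vinf_greatest : forall x y z : V, z <= x -> z <= y -> z <= vinf x y;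
  vl_leD : forall x y z : V, x <= y -> x + z <= y + z;
  vl_leZ : forall (a : R) (x y : V), 0 <= a -> x <= y -> a *: x <= a *: y
}.

#[short(type="vectorLatticeType")]
HB.structure Definition VectorLattice (R : realType) :=
  { V of Lmodule_isVectorLattice R V & Num.POrderedZmodule V & GRing.Lmodule R V }.

Section VL.
Variables (R : realType) (F : vectorLatticeType R).

Definition vabs (x : F) : F := vsup x (- x).
Definition vpos (x : F) : F := vsup x 0.
Definition vmeet (x y : F) : F := vinf x y.

Definition ointerval (x y : F) : set F := fun z => (x <= z) /\ (z <= y).

Definition is_ideal (E : set F) : Prop :=
  E 0 /\
  (forall x y, E x -> E y -> E (x + y)) /\
  (forall (l : R) x, E x -> E (l *: x)) /\
  (forall x y, (vabs x <= vabs y) -> E y -> E x).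

Definition ideal_gen (A : set F) : set F :=
  fun x => forall E : set F, is_ideal E -> (forall a, A a -> E a) -> E x.

Definition principal_ideal (h : F) : set F :=
  fun x => exists l : R, 0 <= l /\ exists y, ointerval (- h) h y /\ x = l *: y.
End VL.

Record dirType := DirType {
  dcar :> Type;
  dle : dcar -> dcar -> Prop;
  dle_refl : forall a, dle a a;
  dle_trans : forall a b c, dle a b -> dle b c -> dle a c;
  dir_ub : forall a b, exists c, dle a c /\ dle b c;
  dir_inh : inhabited dcar
}.

Definition convergence (X : Type) := forall D : dirType, (D -> X) -> X -> Prop.

Definition quasi_subnet (X : Type) (D : dirType) (f : D -> X)
  (E : dirType) (g : E -> X) : Prop :=
  forall a : D, exists e0 : E, forall e : E, dle e0 e ->
    exists a' : D, dle a a' /\ g e = f a'.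

Definition is_convergence (X : Type) (eta : convergence X) : Prop :=
  (forall (D : dirType) (x : X), eta D (fun _ => x) x) /\
  (forall (D : dirType) (f : D -> X) (x : X) (E : dirType) (g : E -> X),
      eta D f x -> quasi_subnet f g -> eta E g x).

Section Conv.
Variables (R : realType) (F : vectorLatticeType R).

Definition conv_stronger (theta eta : convergence F) : Prop :=
  forall (D : dirType) (f : D -> F) x, theta D f x -> eta D f x.

Definition conv_eq (theta eta : convergence F) : Prop :=
  forall (D : dirType) (f : D -> F) x, theta D f x <-> eta D f x.

Definition stronger_on (theta eta : convergence F) (S : set F) : Prop :=
  forall (D : dirType) (f : D -> F) x, (forall a, S (f a)) -> S x -> theta D f x -> eta D f x.

Definition coincide_on (theta eta : convergence F) (S : set F) : Prop :=
  stronger_on theta eta S /\ stronger_on eta theta S.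

Definition ls_additive (eta : convergence F) : Prop :=
  is_convergence eta /\
  (forall (D : dirType) (f g : D -> F) x y,
      eta D f x -> eta D g y -> eta D (fun a => f a + g a) (x + y)) /\
  (forall (D : dirType) (f : D -> F) x, eta D f x -> eta D (fun a => - f a) (- x)) /\
  (forall (D : dirType) (e f : D -> F),
      (forall a, (vabs (e a) <= vabs (f a))) -> eta D f 0 -> eta D e 0).

Definition uconv (A : set F) (eta : convergence F) : convergence F :=
  fun D f x => forall a, A a -> eta D (fun i => vmeet (vabs a) (vabs (f i - x))) 0.

Definition uconvT (eta : convergence F) : convergence F := uconv setT eta.

Definition conv_closed (eta : convergence F) (G : set F) : Prop :=
  forall (D : dirType) (f : D -> F) x, (forall a, G (f a)) -> eta D f x -> G x.

Definition conv_closure (eta : convergence F) (G : set F) : set F :=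
  fun x => forall C : set F, conv_closed eta C -> (forall y, G y -> C y) -> C x.

Definition conv_idempotent (eta : convergence F) : Prop :=
  forall (D B : dirType) (f : D -> F) (g : B -> F),
    (forall a, (0 <= f a)) -> (forall b, (0 <= g b)) ->
    eta B g 0 ->
    (forall b, eta D (fun a => vpos (f a - g b)) 0) ->
    eta D f 0.

Definition topological_unit (eta : convergence F) (h : F) : Prop :=
  (0 <= h) /\ forall x, conv_closure eta (principal_ideal h) x.
End Conv.

Arguments uconv {R F} A eta D f x.
Arguments uconvT {R F} eta D f x.

(* Main.v *)
Require Import Defs.
From HB Require Import structures.
From mathcomp Require Import all_boot all_order all_algebra.
From mathcomp Require Import classical_sets reals boolp.
Import Order.TTheory GRing.Theory Num.Theory.
Local Open Scope ring_scope.
Set Implicit Arguments.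
Unset Strict Implicit.

Section Lat.
Variables (R : realType) (F : vectorLatticeType R).
Implicit Types (x y z u v w c : F).

Lemma leD2r x y z : x <= y -> x + z <= y + z. Proof. exact: vl_leD. Qed.
Lemma leD2l x y z : x <= y -> z + x <= z + y.
Proof. by move=> h; rewrite ![z + _]addrC; apply: leD2r. Qed.
Lemma leDD x y u v : x <= y -> u <= v -> x + u <= y + v.
Proof. by move=> h1 h2; apply: (le_trans (leD2r u h1)); apply: leD2l. Qed.
Lemma leN x y : x <= y -> - y <= - x.
Proof.
move=> h; have := leD2r (- x - y) h. rewrite addrA subrr add0r addrCA subrr addr0. done.
Qed.
Lemma le_subl x y c : x <= y + c -> x - c <= y.
Proof. by move=> h; have := leD2r (- c) h; rewrite addrK. Qed.
Lemma le_subr x y c : x - c <= y -> x <= y + c.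
Proof. by move=> h; have := leD2r c h; rewrite subrK. Qed.
Lemma le_addl_ge0 x y : 0 <= y -> x <= y + x.
Proof. by move=> h; have := leD2r x h; rewrite add0r. Qed.
Lemma ge0D x y : 0 <= x -> 0 <= y -> 0 <= x + y.
Proof. by move=> h1 h2; have := leDD h1 h2; rewrite addr0. Qed.

Lemma infC u v : vinf u v = vinf v u.
Proof. by apply: le_anti; rewrite !vinf_greatest ?vinf_lbl ?vinf_lbr. Qed.
Lemma inf_mono u u' v v' : u <= u' -> v <= v' -> vinf u v <= vinf u' v'.
Proof.
move=> h1 h2; apply: vinf_greatest.
  exact: le_trans (vinf_lbl _ _) h1.
exact: le_trans (vinf_lbr _ _) h2.
Qed.
Lemma inf_ge0 u v : 0 <= u -> 0 <= v -> 0 <= vinf u v.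
Proof. by move=> h1 h2; apply: vinf_greatest. Qed.
Lemma inf_id u v : u <= v -> vinf u v = u.
Proof. by move=> h; apply: le_anti; rewrite vinf_lbl vinf_greatest. Qed.

Lemma ZleZ (l m : R) v : 0 <= v -> l <= m -> l *: v <= m *: v.
Proof.
move=> hv hlm.
have hml : 0 <= m - l by rewrite subr_ge0.
have := vl_leZ _ _ _ hml hv; rewrite scaler0 => h0.
have := leD2l (l *: v) h0; rewrite addr0 -scalerDl.
by rewrite addrC subrK.
Qed.

Lemma abs_ubl x : x <= vabs x. Proof. exact: vsup_ubl. Qed.
Lemma abs_ubr x : - x <= vabs x. Proof. exact: vsup_ubr. Qed.
Lemma two_ge0 v : 0 <= v + v -> 0 <= v.
Proof.
move=> h; have h2 : 0 <= (2:R)^-1 by rewrite invr_ge0 ler0n.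
have := vl_leZ _ _ _ h2 h.
rewrite scaler0 -mulr2n -scaler_nat scalerA mulVf ?scale1r //.
by rewrite pnatr_eq0.
Qed.
Lemma abs_ge0 x : 0 <= vabs x.
Proof. by apply: two_ge0; rewrite -(subrr x); apply: leDD; [apply: abs_ubl|apply: abs_ubr]. Qed.
Lemma abs_le x c : x <= c -> - x <= c -> vabs x <= c.
Proof. exact: vsup_least. Qed.
Lemma abs_id x : 0 <= x -> vabs x = x.
Proof.
move=> h; apply: le_anti; rewrite abs_ubl abs_le //.
by apply: (@le_trans _ _ 0) => //; rewrite -oppr0; apply: leN.
Qed.
Lemma absN x : vabs (- x) = vabs x.
Proof.
apply: le_anti; apply/andP; split; apply: abs_le.
- exact: abs_ubr.
- by rewrite opprK; apply: abs_ubl.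
- by rewrite -[X in X <= _]opprK; apply: abs_ubr.
- exact: abs_ubl.
Qed.
Lemma abs0 : vabs (0 : F) = 0. Proof. by rewrite abs_id. Qed.
Lemma absabs x : vabs (vabs x) = vabs x. Proof. by rewrite abs_id ?abs_ge0. Qed.
Lemma abs_triangle x y : vabs (x + y) <= vabs x + vabs y.
Proof.
apply: abs_le; first by apply: leDD; apply: abs_ubl.
by rewrite opprD; apply: leDD; apply: abs_ubr.
Qed.
Lemma absB x y : vabs (x - y) = vabs (y - x).
Proof. by rewrite -absN opprB. Qed.

Lemma Zle_abs (l c : R) x : `|l| <= c -> l *: x <= c *: vabs x.
Proof.
move=> hl; have [l0|l0] := leP 0 l.
  apply: le_trans (vl_leZ _ _ _ l0 (abs_ubl x)) _.
  by apply: ZleZ; rewrite ?abs_ge0 // -(ger0_norm l0).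
have -> : l *: x = (- l) *: (- x) by rewrite scalerN scaleNr opprK.
apply: le_trans (vl_leZ _ _ _ _ (abs_ubr x)) _; first by rewrite oppr_ge0 ltW.
by apply: ZleZ; rewrite ?abs_ge0 // -(ltr0_norm l0).
Qed.
Lemma absZ_le (l c : R) x : `|l| <= c -> vabs (l *: x) <= c *: vabs x.
Proof.
move=> hl; apply: abs_le; first exact: Zle_abs.
by rewrite -scaleNr; apply: Zle_abs; rewrite normrN.
Qed.

Lemma inf_trans x y c : vinf (x + c) (y + c) <= vinf x y + c.
Proof.
apply: le_subr; apply: vinf_greatest; apply: le_subl.
  exact: vinf_lbl.
exact: vinf_lbr.
Qed.

Lemma riesz u v w : 0 <= u -> 0 <= v -> 0 <= w ->
  vinf w (u + v) <= vinf w u + vinf w v.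
Proof.
move=> hu hv hw; set t := vinf w (u + v).
have tw : t <= w by exact: vinf_lbl.
apply: (le_trans _ (inf_trans _ _ _)); apply: vinf_greatest.
  rewrite addrC; apply: (le_trans _ (inf_trans _ _ _)); apply: vinf_greatest.
    exact: le_trans tw (le_addl_ge0 _ hw).
  exact: le_trans tw (le_addl_ge0 _ hv).
rewrite addrC; apply: (le_trans _ (inf_trans _ _ _)); apply: vinf_greatest.
  by rewrite addrC; apply: le_trans tw (le_addl_ge0 _ hu).
by rewrite addrC; apply: vinf_lbr.
Qed.


Lemma riesz' u v w : 0 <= u -> 0 <= v -> 0 <= w ->
  vinf (u + v) w <= vinf u w + vinf v w.
Proof.
by move=> hu hv hw; rewrite infC [vinf u w]infC [vinf v w]infC; apply: riesz.
Qed.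
Lemma muln_ge0 u n : 0 <= u -> 0 <= u *+ n.
Proof.
by move=> hu; elim: n => [|n IH]; rewrite ?mulr0n // mulrS; apply: ge0D.
Qed.
Lemma inf_muln u y n : 0 <= u -> 0 <= y -> vinf (u *+ n) y <= (vinf u y) *+ n.
Proof.
move=> hu hy; elim: n => [|n IH]; first by rewrite !mulr0n; apply: vinf_lbl.
rewrite !mulrS; apply: le_trans (riesz' hu (muln_ge0 n hu) hy) _.
exact: leD2l.
Qed.
Lemma interval_abs c p q : ointerval 0 c p -> ointerval 0 c q -> vabs (p - q) <= c.
Proof.
move=> [p0 pc] [q0 qc]; apply: abs_le.
  apply: le_trans pc; apply: le_subl; rewrite addrC; exact: le_addl_ge0.
rewrite opprB; apply: le_trans qc; apply: le_subl; rewrite addrC; exact: le_addl_ge0.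
Qed.
End Lat.

Section Cv.
Unset Implicit Arguments.
Variables (R : realType) (F : vectorLatticeType R) (eta : convergence F).
Set Implicit Arguments.
Hypothesis Heta : ls_additive eta.

Lemma cst (D : dirType) (x : F) : eta D (fun _ => x) x.
Proof. by case: Heta => [[hc _] _]; apply: hc. Qed.

Lemma solid_pos (D : dirType) (e f : D -> F) : eta D f 0 -> (forall i, 0 <= e i) ->
  (forall i, e i <= f i) -> eta D e 0.
Proof.
case: Heta => _ [_ [_ hs]] hf he hef; apply: hs hf => i.
have e0 := he i; have f0 : 0 <= f i := le_trans e0 (hef i).
by rewrite !abs_id //; apply: hef.
Qed.

Lemma eta_sub0 (D : dirType) (f : D -> F) x : eta D f x -> eta D (fun i => f i - x) 0.
Proof.
case: Heta => _ [ha _] hf; have := ha _ _ _ _ _ hf (cst D (- x)).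
by rewrite subrr.
Qed.

Lemma eta_add0 (D : dirType) (f : D -> F) x : eta D (fun i => f i - x) 0 -> eta D f x.
Proof.
case: Heta => _ [ha _] hf; have := ha _ _ _ _ _ hf (cst D x).
rewrite add0r; congr (eta D _ x); apply: funext => i; exact: subrK.
Qed.

Lemma eta_muln (D : dirType) (g : D -> F) n : eta D g 0 -> eta D (fun i => g i *+ n) 0.
Proof.
case: Heta => _ [ha _] hg; elim: n => [|n IH].
  have -> : (fun i => g i *+ 0) = fun _ => 0 by apply: funext => i; rewrite mulr0n.
  exact: cst.
have := ha _ _ _ _ _ hg IH; rewrite addr0.
by have -> : (fun i => g i *+ n.+1) = fun i => g i + g i *+ n by apply: funext => i; rewrite mulrS.
Qed.

Definition Sset (D : dirType) (y : D -> F) : set F :=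
  fun b => eta D (fun i => vmeet (vabs b) (y i)) 0.

Lemma S_ideal (D : dirType) (y : D -> F) : (forall i, 0 <= y i) -> is_ideal (Sset y).
Proof.
move=> hy; rewrite /Sset /vmeet; split; [|split; [|split]].
- apply: solid_pos (cst D 0) _ _ => i; first by apply: inf_ge0; rewrite ?abs_ge0.
  by rewrite abs0; apply: vinf_lbl.
- move=> b1 b2 h1 h2; case: Heta => _ [ha _].
  have := ha _ _ _ _ _ h1 h2; rewrite addr0 => hs.
  apply: solid_pos hs _ _ => i; first by apply: inf_ge0; rewrite ?abs_ge0.
  apply: le_trans (inf_mono (abs_triangle b1 b2) (lexx _)) _.
  by apply: riesz'; rewrite ?abs_ge0.
- move=> l b hb.
  have hn : `|l| <= (Num.Def.archi_bound `|l|)%:R.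
    by apply: ltW; apply: archi_boundP.
  have := eta_muln (Num.Def.archi_bound `|l|) hb => hs.
  apply: solid_pos hs _ _ => i; first by apply: inf_ge0; rewrite ?abs_ge0.
  apply: le_trans (inf_mono (absZ_le b hn) (lexx _)) _.
  by rewrite scaler_nat; apply: inf_muln; rewrite ?abs_ge0.
- move=> x z hxz hz; apply: solid_pos hz _ _ => i.
    by apply: inf_ge0; rewrite ?abs_ge0.
  exact: inf_mono hxz (lexx _).
Qed.

Lemma S_closed (D : dirType) (y : D -> F) : conv_idempotent eta -> (forall i, 0 <= y i) ->
  conv_closed eta (Sset y).
Proof.
move=> Hid hy B bb b Sbb hconv; rewrite /Sset /vmeet.
apply: (Hid D B (fun i => vinf (vabs b) (y i)) (fun j => vabs (b - bb j))).
- by move=> i; apply: inf_ge0; rewrite ?abs_ge0.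
- by move=> j; apply: abs_ge0.
- case: Heta => _ [_ [_ hs]]; apply: hs (eta_sub0 hconv) => j.
  by rewrite absabs absB.
- move=> j; apply: solid_pos (Sbb j) _ _ => i; first exact: vsup_ubr.
  apply: vsup_least; last by apply: inf_ge0; rewrite ?abs_ge0.
  apply: le_subl.
  have := abs_triangle (b - bb j) (bb j); rewrite subrK => ht.
  apply: le_trans (inf_mono ht (lexx _)) _.
  apply: le_trans (riesz' (abs_ge0 _) (abs_ge0 _) (hy i)) _.
  by rewrite addrC; apply: leD2l; apply: vinf_lbl.
Qed.

Lemma uconv_gen (A : set F) (D : dirType) (f : D -> F) x : uconv A eta D f x ->
  forall b, ideal_gen A b -> eta D (fun i => vmeet (vabs b) (vabs (f i - x))) 0.
Proof.
move=> hu b hb; apply: (hb (Sset (fun i => vabs (f i - x)))) => //.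
by apply: S_ideal => i; apply: abs_ge0.
Qed.

Lemma uconv_clos (A : set F) (D : dirType) (f : D -> F) x : conv_idempotent eta ->
  uconv A eta D f x ->
  forall b, conv_closure eta (ideal_gen A) b ->
  eta D (fun i => vmeet (vabs b) (vabs (f i - x))) 0.
Proof.
move=> Hid hu b hb; apply: (hb (Sset (fun i => vabs (f i - x)))).
  by apply: S_closed => // i; apply: abs_ge0.
by move=> c hc; apply: uconv_gen hu c hc.
Qed.

Lemma eta_uconv (A : set F) (D : dirType) (f : D -> F) x : eta D f x -> uconv A eta D f x.
Proof.
move=> he a ha; apply: solid_pos (_ : eta D (fun i => vabs (f i - x)) 0) _ _.
- case: Heta => _ [_ [_ hs]]; apply: hs (eta_sub0 he) => i; rewrite absabs; exact: lexx.
- by move=> i; apply: inf_ge0; rewrite ?abs_ge0.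
- by move=> i; apply: vinf_lbr.
Qed.

Lemma uconv_ls (A : set F) : ls_additive (uconv A eta).
Proof.
case: Heta => [[hc hsub] [ha [hn hs]]].
split; [split|split; [|split]].
- move=> D x a _; rewrite subrr abs0 /vmeet infC inf_id ?abs_ge0 //; exact: cst.
- move=> D f x E g hf hq a hA; apply: hsub (hf a hA) _.
  move=> d; have [e0 he0] := hq d; exists e0 => e /he0 [a' [h1 h2]].
  by exists a'; split => //; rewrite h2.
- move=> D f g x y hf hg a hA; have := ha _ _ _ _ _ (hf a hA) (hg a hA).
  rewrite addr0 => hsum; apply: solid_pos hsum _ _ => i.
    by apply: inf_ge0; rewrite ?abs_ge0.
  rewrite /vmeet opprD addrACA.
  apply: le_trans (inf_mono (lexx _) (abs_triangle _ _)) _.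
  by apply: riesz; rewrite ?abs_ge0.
- move=> D f x hf a hA.
  have -> : (fun i => vmeet (vabs a) (vabs (- f i - - x))) =
            (fun i => vmeet (vabs a) (vabs (f i - x))).
    by apply: funext => i; rewrite -opprD absN.
  exact: hf.
- move=> D e f hef hf a hA; apply: solid_pos (hf a hA) _ _ => i.
    by apply: inf_ge0; rewrite ?abs_ge0.
  by rewrite !subr0; apply: inf_mono (lexx _) (hef i).
Qed.

End Cv.

Lemma uconv_ext (R : realType) (F : vectorLatticeType R) (eta : convergence F)
  (A B : set F) : (forall x, A x <-> B x) -> conv_eq (uconv A eta) (uconv B eta).
Proof.
move=> hAB D f x; split=> hu a ha; apply: hu; exact/hAB.
Qed.

Lemma setT_ideal (R : realType) (F : vectorLatticeType R) : is_ideal (@setT F).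
Proof. by split; [|split; [|split]]. Qed.

Lemma uconv_uconv (R : realType) (F : vectorLatticeType R) (eta : convergence F)
  (E H : set F) : ls_additive eta -> is_ideal E -> is_ideal H ->
  conv_eq (uconv H (uconv E eta)) (uconv (setI E H) eta).
Proof.
move=> Heta HE HH D f x; split.
- move=> hu b [hbE hbH]; have := hu b hbH b hbE => hs.
  apply: (solid_pos Heta hs) => i; first by apply: inf_ge0; rewrite ?abs_ge0.
  rewrite subr0 (abs_id (inf_ge0 (abs_ge0 _) (abs_ge0 _))) /vmeet.
  by apply: vinf_greatest; [apply: vinf_lbl | apply: lexx].
- move=> hu a haH e heE.
  set b := vinf (vabs e) (vabs a).
  have b0 : 0 <= b by apply: inf_ge0; apply: abs_ge0.
  have hb : setI E H b.
    split.
      apply: HE.2.2.2 heE; rewrite (abs_id b0); exact: vinf_lbl.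
    apply: HH.2.2.2 haH; rewrite (abs_id b0); exact: vinf_lbr.
  apply: (solid_pos Heta (hu b hb)) => i; first by apply: inf_ge0; rewrite ?abs_ge0.
  rewrite subr0 (abs_id (inf_ge0 (abs_ge0 _) (abs_ge0 _))) (abs_id b0) /vmeet /b.
  apply: vinf_greatest; first apply: vinf_greatest.
  + exact: vinf_lbl.
  + exact: le_trans (vinf_lbr _ _) (vinf_lbl _ _).
  + exact: le_trans (vinf_lbr _ _) (vinf_lbr _ _).
Qed.

Theorem proposition3p1 (R : realType)
    (F : vectorLatticeType R) (eta : convergence F) (A E H : set F) :
  ls_additive eta -> is_ideal E -> is_ideal H ->
  (* (i) *)
  (conv_eq (uconv A eta) (uconv (ideal_gen A) eta) /\
   ls_additive (uconv A eta) /\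
   (forall a, A a -> stronger_on (uconv A eta) eta (ointerval 0 (vabs a))) /\
   (forall theta : convergence F, ls_additive theta ->
      (forall a, A a -> stronger_on theta eta (ointerval 0 (vabs a))) ->
      conv_stronger theta (uconv A eta)) /\
   (forall a, A a -> coincide_on (uconv A eta) eta (ointerval 0 (vabs a)))) /\
  (* (ii) *)
  (forall (D : dirType) (f : D -> F), (forall i, (0 <= f i)) ->
     (uconv A eta D f 0 <->
      (forall a, A a -> forall g : D -> F,
         (forall i, ointerval 0 (vabs a) (g i)) ->
         (forall i, (0 <= g i) /\ (g i <= f i)) ->
         eta D g 0))) /\
  (* (iii) *)
  (conv_eq (uconv H (uconv E eta)) (uconv (setI E H) eta) /\
   conv_eq (uconv E (uconvT eta)) (uconv E eta) /\
   conv_eq (uconvT (uconv E eta)) (uconv E eta) /\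
   conv_eq (uconv E (uconv E eta)) (uconv E eta)) /\
  (* (iv) *)
  (conv_idempotent eta ->
     conv_eq (uconv A eta) (uconv (conv_closure eta (ideal_gen A)) eta)) /\
  (* (v) *)
  (forall h : F, conv_idempotent eta -> topological_unit eta h ->
     forall (D : dirType) (f : D -> F), (forall i, (0 <= f i)) ->
       (uconvT eta D f 0 <-> eta D (fun i => vmeet h (f i)) 0)).
Proof.
move=> Heta HE HH.
have Hstr : forall a, A a -> stronger_on (uconv A eta) eta (ointerval 0 (vabs a)).
  move=> a ha D f x hf hx hu; apply: (eta_add0 Heta).
  have := hu a ha => hs.
  case: Heta => _ [_ [_ hsol]]; apply: hsol hs => i.
  have hle := interval_abs (hf i) hx.
  by rewrite /vmeet infC (inf_id hle) absabs.
split; [split; [|split; [|split; [|split]]] | split; [|split; [split; [|split; [|split]]|split]]].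
- move=> D f x; split => hu.
    by move=> b hb; apply: (uconv_gen Heta hu hb).
  move=> a ha; apply: hu => E' _ hA; exact: hA a ha.
- exact: uconv_ls.
- exact: Hstr.
- move=> th Hth hst D f x hth a ha.
  have h1 := eta_sub0 Hth hth.
  have h2 : th D (fun i => vmeet (vabs a) (vabs (f i - x))) 0.
    case: Hth => _ [_ [_ hsol]]; apply: hsol h1 => i.
    rewrite abs_id; last by apply: inf_ge0; rewrite ?abs_ge0.
    exact: vinf_lbr.
  apply: (hst a ha) h2.
  + by move=> i; split; [apply: inf_ge0; rewrite ?abs_ge0 | apply: vinf_lbl].
  + by split; [apply: lexx | apply: abs_ge0].
- move=> a ha; split; first exact: Hstr.
  move=> D f x _ _ he; exact: eta_uconv.
- move=> D f hf; split.
    move=> hu a ha g hg hgf; apply: (solid_pos Heta (hu a ha)) => i.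
      by case: (hgf i).
    rewrite subr0 (abs_id (hf i)) /vmeet.
    by apply: vinf_greatest; [case: (hg i) | case: (hgf i)].
  move=> hyp a ha; apply: (hyp a ha).
    by move=> i; split; [apply: inf_ge0; rewrite ?abs_ge0 | apply: vinf_lbl].
  move=> i; split; first by apply: inf_ge0; rewrite ?abs_ge0.
  by rewrite subr0 (abs_id (hf i)); apply: vinf_lbr.
- exact: uconv_uconv Heta HE HH.
- move=> D f x; rewrite /uconvT; have h1 := uconv_uconv Heta (setT_ideal F) HE f x.
  have h2 : uconv (setI setT E) eta D f x <-> uconv E eta D f x.
    by apply: uconv_ext => y; split; [case | move=> hy; split].
  exact: iff_trans h1 h2.
- move=> D f x; rewrite /uconvT; have h1 := uconv_uconv Heta HE (setT_ideal F) f x.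
  have h2 : uconv (setI E setT) eta D f x <-> uconv E eta D f x.
    by apply: uconv_ext => y; split; [case | move=> hy; split].
  exact: iff_trans h1 h2.
- move=> D f x; rewrite /uconvT; have h1 := uconv_uconv Heta HE HE f x.
  have h2 : uconv (setI E E) eta D f x <-> uconv E eta D f x.
    by apply: uconv_ext => y; split; [case | move=> hy; split].
  exact: iff_trans h1 h2.
- move=> Hid D f x; split => hu.
    by move=> b hb; apply: (uconv_clos Heta Hid hu hb).
  move=> a ha; apply: hu => C _ hC; apply: hC => E' _ hA; exact: hA a ha.
- move=> h Hid [h0 htu] D f hf; split.
    move=> hu; have := hu h I => hs; apply: (solid_pos Heta hs) => i.
      by apply: inf_ge0.
    by rewrite subr0 (abs_id h0) (abs_id (hf i)); apply: lexx.
  move=> he.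
  have hs : uconv (fun b => b = h) eta D f 0.
    move=> b ->; apply: (solid_pos Heta he) => i.
      by apply: inf_ge0; rewrite ?abs_ge0.
    by rewrite subr0 (abs_id h0) (abs_id (hf i)); apply: lexx.
  move=> a _; apply: (uconv_clos Heta Hid hs (b:=a)).
  move=> C hC hsub; apply: (htu a C hC).
  move=> y [l [hl [z [hz ->]]]]; apply: hsub => E' hE' hA.
  apply: hE'.2.2.1; apply: hE'.2.2.2 (hA h erefl).
  rewrite (abs_id h0); case: hz => hz1 hz2; apply: abs_le => //.
  by rewrite -(opprK h); apply: leN.
Qed.
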